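(* Let $g(z)=\frac{1+z^2}{1-z-z^2}$ (the generating function of the modified Lucas numbers $1,1,3,4,7,11,\dots$) and $$f(z)=\frac{1-z-z^2-\sqrt{z^4+10z^3-13z^2-10z+1}}{4-2z},$$ where the square root is the formal power series with constant term $1$. Then $f(z)$ is a formal power series with $f(0)=0$ and $f'(0)\neq 0$, and the Riordan matrix $(g(z),f(z))$ is a pseudo-involution.
   Context: A Riordan matrix is a pair $(g(z),f(z))$ of formal power series over $\mathbb{C}$ with $g(z)=\sum_{n\ge 0} g_n z^n$, $g_0\neq 0$, and $f(z)=\sum_{n\ge 1} f_n z^n$ with $f_1\neq 0$; it represents the infinite lower-triangular matrix whose $k$-th column ($k\ge 0$) has generating function $g(z)f(z)^k$. Riordan matrices form a group under matrix multiplication, where $(g(z),f(z))*(h(z),l(z))=(g(z)h(f(z)),\,l(f(z)))$ and the identity is $(1,z)$. Let $M=(1,-z)$. A Riordan matrix $L$ is called a pseudo-involution if $(L*M)*(L*M)=(1,z)$. *)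

(* Defs.v *)
From HB Require Import structures.
From mathcomp Require Import all_boot all_order all_algebra all_field.
Set Implicit Arguments. Unset Strict Implicit. Unset Printing Implicit Defensive.
Import Order.TTheory GRing.Theory Num.Theory.
Local Open Scope ring_scope.

Definition fps := nat -> algC.

Definition ofseq (s : seq algC) : fps := fun n => nth 0 s n.
Definition fps1 : fps := ofseq [:: 1].
Definition fpsX : fps := ofseq [:: 0; 1].
Definition fps_opp (a : fps) : fps := fun n => - a n.
Definition fps_sub (a b : fps) : fps := fun n => a n - b n.

Definition fps_mul (a b : fps) : fps :=
  fun n => \sum_(i < n.+1) a i * b (n - i)%N.

Fixpoint fps_pow (a : fps) (k : nat) : fps :=
  match k with 0 => fps1 | k'.+1 => fps_mul a (fps_pow a k') end.

(* composition h(f(z)); meaningful when f 0 = 0 *)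
Definition fps_comp (h f : fps) : fps :=
  fun n => \sum_(k < n.+1) h k * fps_pow f k n.

Fixpoint inv_upto (a : fps) (n : nat) : seq algC :=
  match n with
  | 0 => [:: (a 0%N)^-1]
  | n'.+1 => let s := inv_upto a n' in
      rcons s (- (a 0%N)^-1 * \sum_(j < n'.+1) a j.+1 * nth 0 s (n' - j)%N)
  end.
Definition fps_inv (a : fps) : fps := fun n => nth 0 (inv_upto a n) n.
Definition fps_div (a b : fps) : fps := fps_mul a (fps_inv b).

Fixpoint sqrt_upto (p : fps) (n : nat) : seq algC :=
  match n with
  | 0 => [:: 1]
  | n'.+1 => let s := sqrt_upto p n' in
      rcons s ((p n'.+1 - \sum_(j < n') nth 0 s j.+1 * nth 0 s (n' - j)%N) / 2%:R)
  end.
Definition fps_sqrt1 (p : fps) : fps := fun n => nth 0 (sqrt_upto p n) n.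

Definition riordan := (fps * fps)%type.
Definition is_riordan (L : riordan) : Prop :=
  L.1 0%N != 0 /\ L.2 0%N = 0 /\ L.2 1%N != 0.
Definition rmul (L K : riordan) : riordan :=
  (fps_mul L.1 (fps_comp K.1 L.2), fps_comp K.2 L.2).
Definition rid : riordan := (fps1, fpsX).
Definition rM : riordan := (fps1, fps_opp fpsX).
Definition riordan_eq (L K : riordan) : Prop :=
  forall n, L.1 n = K.1 n /\ L.2 n = K.2 n.
Definition pseudo_involution (L : riordan) : Prop :=
  riordan_eq (rmul (rmul L rM) (rmul L rM)) rid.

Definition lucas_g : fps := fps_div (ofseq [:: 1; 0; 1]) (ofseq [:: 1; -1; -1]).
Definition disc : fps := ofseq [:: 1; -10%:R; -13%:R; 10%:R; 1].
Definition lucas_f : fps :=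
  fps_div (fps_sub (ofseq [:: 1; -1; -1]) (fps_sqrt1 disc)) (ofseq [:: 4%:R; -2%:R]).

(* Main.v *)
Require Import Defs.
From mathcomp Require Import all_boot all_order all_algebra all_field.
From mathcomp Require Import ring zify.
Import GRing.Theory Num.Theory.
Local Open Scope ring_scope.
Set Implicit Arguments. Unset Strict Implicit.

Lemma inv_upto_size (a : fps) n : size (inv_upto a n) = n.+1.
Proof. by elim: n => //= n IH; rewrite size_rcons IH. Qed.

Lemma inv_upto_nth (a : fps) n j : (j <= n)%N -> nth 0 (inv_upto a n) j = fps_inv a j.
Proof.
elim: n j => [|n IH] j hj; first by case: j hj.
rewrite leq_eqVlt in hj; case/orP: hj => [/eqP -> // | hj].
by rewrite /= nth_rcons inv_upto_size hj IH.
Qed.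

Lemma fps_invS (a : fps) n : fps_inv a n.+1 =
  - (a 0%N)^-1 * \sum_(j < n.+1) a j.+1 * fps_inv a (n - j)%N.
Proof.
rewrite {1}/fps_inv /= nth_rcons inv_upto_size ltnn eqxx; congr (_ * _).
by apply: eq_bigr => j _; rewrite inv_upto_nth // leq_subr.
Qed.

Lemma fps_mul_inv (a : fps) n : a 0%N != 0 -> fps_mul a (fps_inv a) n = fps1 n.
Proof.
move=> a0; case: n => [|n].
  by rewrite /fps_mul big_ord1 /fps_inv /= divff.
rewrite /fps_mul big_ord_recl subn0 fps_invS.
under [X in _ + X = _]eq_bigr => i _ do rewrite lift0 subSS.
rewrite mulrA mulrN divff // mulN1r addNr.
by case: n.
Qed.

Lemma sqrt_upto_size (p : fps) n : size (sqrt_upto p n) = n.+1.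
Proof. by elim: n => //= n IH; rewrite size_rcons IH. Qed.

Lemma sqrt_upto_nth (p : fps) n j : (j <= n)%N -> nth 0 (sqrt_upto p n) j = fps_sqrt1 p j.
Proof.
elim: n j => [|n IH] j hj; first by case: j hj.
rewrite leq_eqVlt in hj; case/orP: hj => [/eqP -> // | hj].
by rewrite /= nth_rcons sqrt_upto_size hj IH.
Qed.

Lemma fps_sqrtS (p : fps) n : fps_sqrt1 p n.+1 =
  (p n.+1 - \sum_(j < n) fps_sqrt1 p j.+1 * fps_sqrt1 p (n - j)%N) / 2%:R.
Proof.
rewrite {1}/fps_sqrt1 /= nth_rcons sqrt_upto_size ltnn eqxx; congr ((_ - _) / _).
by apply: eq_bigr => j _; rewrite !sqrt_upto_nth // ?leq_subr //; apply: ltnW.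
Qed.

Lemma fps_sqrt0 (p : fps) : fps_sqrt1 p 0%N = 1.
Proof. by []. Qed.

Lemma fps_mul_sqrt (p : fps) n : p 0%N = 1 ->
  fps_mul (fps_sqrt1 p) (fps_sqrt1 p) n = p n.
Proof.
move=> p0; case: n => [|n].
  by rewrite /fps_mul big_ord1 fps_sqrt0 mulr1.
rewrite /fps_mul big_ord_recl subn0.
under [X in _ + X = _]eq_bigr => i _ do rewrite lift0 subSS.
rewrite big_ord_recr /= subnn.
rewrite fps_sqrt0 mul1r mulr1 fps_sqrtS.
have h2 : (2%:R : algC) != 0 by rewrite pnatr_eq0.
by field.
Qed.

Lemma fps_pow_low (f : fps) k i : f 0%N = 0 -> (i < k)%N -> fps_pow f k i = 0.
Proof.
move=> f0; elim: k i => [|k IH] i // hik.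
rewrite /= /fps_mul big1 // => j _.
case: (nat_of_ord j) (ltn_ord j) => [|j'] hj; first by rewrite f0 mul0r.
rewrite IH ?mulr0 //.
rewrite ltnS in hik. rewrite ltnS in hj.
lia.
Qed.

Section Trunc.
Variable N : nat.
Definition MN : {poly algC} := 'X^(N.+1).
Definition eqN (p q : {poly algC}) := MN %| p - q.
Definition T (a : fps) : {poly algC} := \poly_(i < N.+1) a i.

Lemma eqN_coef (p q : {poly algC}) : (forall i, (i <= N)%N -> p`_i = q`_i) -> eqN p q.
Proof.
move=> h; apply/dvdpP; set d := p - q.
exists (\poly_(i < size d) d`_(i + N.+1)); apply/polyP => i.
rewrite /MN coefMXn; case: ltnP => hi.
  by rewrite /d coefB h ?subrr.
rewrite coef_poly subnK //; case: ltnP => // hs.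
by rewrite nth_default //; apply: leq_trans hs (leq_subr _ _).
Qed.

Lemma coef_eqN (p q : {poly algC}) i : eqN p q -> (i <= N)%N -> p`_i = q`_i.
Proof.
move=> /dvdpP [r hr] hi; apply/eqP; rewrite -subr_eq0 -coefB hr /MN coefMXn.
by rewrite ltnS hi.
Qed.

Lemma eqN_refl p : eqN p p. Proof. by rewrite /eqN subrr dvdp0. Qed.
Lemma eqN_sym p q : eqN p q -> eqN q p.
Proof. by rewrite /eqN -opprB dvdpNr. Qed.
Lemma eqN_trans p q r : eqN p q -> eqN q r -> eqN p r.
Proof.
move=> h1 h2; rewrite /eqN in h1 h2 *; have -> : p - r = (p - q) + (q - r) by ring.
exact: dvdp_add.
Qed.
Lemma eqN_add p q p' q' : eqN p p' -> eqN q q' -> eqN (p + q) (p' + q').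
Proof.
move=> h1 h2; rewrite /eqN in h1 h2 *; have -> : p + q - (p' + q') = (p - p') + (q - q') by ring.
exact: dvdp_add.
Qed.
Lemma eqN_opp p p' : eqN p p' -> eqN (- p) (- p').
Proof. by move=> h; rewrite /eqN -opprD dvdpNr. Qed.
Lemma eqN_mul p q p' q' : eqN p p' -> eqN q q' -> eqN (p * q) (p' * q').
Proof.
move=> h1 h2; rewrite /eqN in h1 h2 *; have -> : p * q - (p' * q') = q * (p - p') + p' * (q - q') by ring.
by apply: dvdp_add; apply: dvdp_mull.
Qed.
Lemma eqN_exp p p' k : eqN p p' -> eqN (p ^+ k) (p' ^+ k).
Proof.
move=> h; elim: k => [|k IH]; first exact: eqN_refl.
by rewrite !exprS; apply: eqN_mul.
Qed.

Lemma eqN_compr p q q' : eqN q q' -> eqN (p \Po q) (p \Po q').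
Proof.
move=> h; elim/poly_ind: p => [|p c IH]; first by rewrite !comp_poly0; exact: eqN_refl.
rewrite !comp_polyD !comp_polyM !comp_polyX !comp_polyC.
apply: eqN_add; [exact: eqN_mul | exact: eqN_refl].
Qed.

Lemma eqN_compl (p p' q : {poly algC}) : eqN p p' -> q`_0 = 0 -> eqN (p \Po q) (p' \Po q).
Proof.
move=> /dvdpP [r hr] q0; rewrite /eqN -comp_polyB hr comp_polyM /MN comp_Xn_poly.
apply: dvdp_mull; apply: dvdp_exp2r.
have := dvdp_XsubCl q 0; rewrite polyC0 subr0 => ->.
by rewrite rootE horner_coef0 q0.
Qed.

Lemma eqN_cancel (p c : {poly algC}) : eqN (p * c) 0 -> c`_0 != 0 -> eqN p 0.
Proof.
rewrite /eqN !subr0 => h c0; rewrite -(Gauss_dvdpl _ (q := c)) //.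
apply: coprimep_expl; rewrite coprimep_sym.
have := coprimep_XsubC c 0; rewrite polyC0 subr0 => ->.
by rewrite rootE horner_coef0.
Qed.

Lemma coefT a i : (i <= N)%N -> (T a)`_i = a i.
Proof. by move=> hi; rewrite coef_poly ltnS hi. Qed.

Lemma T_ext a b : (forall i, a i = b i) -> T a = T b.
Proof. by move=> h; apply/polyP => i; rewrite !coef_poly h. Qed.

Lemma T_sub a b : T (fps_sub a b) = T a - T b.
Proof. by apply/polyP => i; rewrite coefB !coef_poly; case: ifP; rewrite ?subr0. Qed.

Lemma T_mul a b : eqN (T (fps_mul a b)) (T a * T b).
Proof.
apply: eqN_coef => i hi; rewrite coefT // coefM; apply: eq_bigr => j _.
have hj := ltn_ord j; rewrite !coefT //; lia.
Qed.

Lemma T_ofseq s : eqN (T (ofseq s)) (Poly s).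
Proof. by apply: eqN_coef => i hi; rewrite coefT // coef_Poly. Qed.

Lemma T_one : eqN (T fps1) 1.
Proof. apply: eqN_coef => i hi; rewrite coefT // coef1.
by case: i hi => [|i] _; rewrite /fps1 /ofseq /= ?nth_nil. Qed.

Lemma T_pow a k : eqN (T (fps_pow a k)) (T a ^+ k).
Proof.
elim: k => [|k IH]; first exact: T_one.
rewrite exprS /=; apply: eqN_trans (T_mul _ _) _.
apply: eqN_mul => //; exact: eqN_refl.
Qed.

Lemma T_comp h f : f 0%N = 0 -> eqN (T (fps_comp h f)) (T h \Po T f).
Proof.
move=> f0; apply: eqN_coef => i hi; rewrite coefT // coef_comp_poly /fps_comp.
have hs : (size (T h) <= N.+1)%N by apply: size_poly.
rewrite (big_ord_widen _ (fun k => (T h)`_k * (T f ^+ k)`_i) hs).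
rewrite (big_ord_widen _ (fun k => h k * fps_pow f k i) (_ : i.+1 <= N.+1)%N) //.
rewrite big_mkcond [in RHS]big_mkcond; apply: eq_bigr => k _.
rewrite -(coef_eqN (T_pow f k) hi) (coefT (fps_pow f k) hi).
have hk : (k <= N)%N by rewrite -ltnS.
rewrite -(coefT h hk).
case: ifP => hk1; case: ifP => hk2 //.
  by rewrite nth_default ?mul0r // leqNgt hk2.
by rewrite fps_pow_low ?mulr0 // ltnNge -ltnS hk1.
Qed.

End Trunc.

Definition Pp : {poly algC} := 1 - 'X - 'X^2.
Definition Ap : {poly algC} := 1 + 'X^2.
Definition Dp : {poly algC} := 1 - 'X *+ 10 - 'X^2 *+ 13 + 'X^3 *+ 10 + 'X^4.
Definition Wp : {poly algC} := 1 *+ 4 - 'X *+ 2.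
Definition Q2 (u y : {poly algC}) := (1 *+ 2 - u) * y^+2 - (1 - u - u^+2) * y + u + u^+2 *+ 2.

Ltac polycoef := apply/polyP => -[|[|[|[|[|[|?]]]]]]; rewrite coef_Poly !coefE /=; ring.

Lemma PolyP : Poly [:: 1; -1; -1] = Pp. Proof. rewrite /Pp; polycoef. Qed.
Lemma PolyA : Poly [:: 1; 0; 1] = Ap. Proof. rewrite /Ap; polycoef. Qed.
Lemma PolyD : Poly [:: 1; -10%:R; -13%:R; 10%:R; 1] = Dp. Proof. rewrite /Dp; polycoef. Qed.
Lemma PolyW : Poly [:: 4%:R; -2%:R] = Wp. Proof. rewrite /Wp; polycoef. Qed.
Lemma PolyX : Poly [:: 0; 1 : algC] = 'X. Proof. polycoef. Qed.
Lemma PolymX : Poly [:: 0; -1 : algC] = - 'X. Proof. polycoef. Qed.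

Lemma lucas_f0 : lucas_f 0%N = 0.
Proof.
by rewrite /lucas_f /fps_div /fps_mul big_ord1 /fps_sub /= subrr mul0r.
Qed.

Lemma disc0 : disc 0%N = 1. Proof. by []. Qed.

Lemma w0ne : (ofseq [:: 4%:R; -2%:R]) 0%N != 0.
Proof. by rewrite /ofseq /= pnatr_eq0. Qed.

Lemma P0ne : (ofseq [:: 1; -1; -1]) 0%N != 0.
Proof. by rewrite /ofseq /= oner_eq0. Qed.

Lemma Q2comp u y w : Q2 u y \Po w = Q2 (u \Po w) (y \Po w).
Proof. by rewrite /Q2 !(rmorphB, rmorphD, rmorphM, rmorphMn, rmorphXn, rmorph1). Qed.

Lemma comp1 (w : {poly algC}) : 1 \Po w = 1.
Proof. by rewrite -polyC1 comp_polyC. Qed.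
Lemma compP w : Pp \Po w = 1 - w - w ^+ 2.
Proof. by rewrite /Pp !comp_polyB comp1 comp_polyX comp_Xn_poly. Qed.
Lemma compA w : Ap \Po w = 1 + w ^+ 2.
Proof. by rewrite /Ap !comp_polyD comp1 comp_Xn_poly. Qed.

Section Main.
Variable N : nat.
Local Notation eqN := (eqN N).
Local Notation T := (T N).
Local Notation F := (T lucas_f).
Local Notation G := (T lucas_g).
Local Notation S := (T (fps_sqrt1 disc)).
Local Notation I := (T (fps_inv (ofseq [:: 4%:R; -2%:R]))).
Local Notation J := (T (fps_inv (ofseq [:: 1; -1; -1]))).

Lemma hS : eqN (S * S) Dp.
Proof.
apply: eqN_trans (eqN_sym (T_mul _ _ _)) _.
rewrite (T_ext _ (fun n => fps_mul_sqrt n disc0)) -PolyD; exact: T_ofseq.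
Qed.

Lemma hWI : eqN (Wp * I) 1.
Proof.
rewrite -PolyW; apply: eqN_trans (eqN_mul (eqN_sym (T_ofseq _ _)) (eqN_refl _ _)) _.
apply: eqN_trans (eqN_sym (T_mul _ _ _)) _.
rewrite (T_ext _ (fun n => fps_mul_inv n w0ne)); exact: T_one.
Qed.

Lemma hPJ : eqN (Pp * J) 1.
Proof.
rewrite -PolyP; apply: eqN_trans (eqN_mul (eqN_sym (T_ofseq _ _)) (eqN_refl _ _)) _.
apply: eqN_trans (eqN_sym (T_mul _ _ _)) _.
rewrite (T_ext _ (fun n => fps_mul_inv n P0ne)); exact: T_one.
Qed.

Lemma hF : eqN F ((Pp - S) * I).
Proof.
apply: eqN_trans (T_mul _ _ _) _; rewrite T_sub -PolyP.
apply: eqN_mul; last exact: eqN_refl.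
apply: eqN_add; [exact: T_ofseq | exact: eqN_refl].
Qed.

Lemma hG : eqN G (Ap * J).
Proof.
apply: eqN_trans (T_mul _ _ _) _; rewrite -PolyA.
apply: eqN_mul; [exact: T_ofseq | exact: eqN_refl].
Qed.

Lemma hQ : eqN (Q2 'X F) 0.
Proof.
apply: (@eqN_cancel N _ (1 *+ 2)); last first.
  by rewrite coefMn coef1 /= pnatr_eq0.
have h1 := hS; have h2 := hWI; have h3 := hF.
rewrite /eqN in h1 h2 h3 *; rewrite subr0.
set E := Wp * (F - (Pp - S) * I) + (Pp - S) * (Wp * I - 1).
have -> : Q2 'X F * (1 *+ 2) =
  (- (Q2 'X F *+ 2)) * (Wp * I - 1) + I * (S * S - Dp)
  + (I * (E - S *+ 2) * Wp) * (F - (Pp - S) * I)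
  + (I * (E - S *+ 2) * (Pp - S)) * (Wp * I - 1).
  rewrite /E /Q2 /Wp /Dp /Pp; ring.
by rewrite !dvdp_add // dvdp_mull.
Qed.

Lemma F0 : F`_0 = 0.
Proof. by rewrite coefT // lucas_f0. Qed.

Lemma w0 : (- F)`_0 = 0.
Proof. by rewrite coefN F0 oppr0. Qed.

Lemma hY : eqN (- (F \Po (- F))) 'X.
Proof.
set w := - F; set Y := F \Po w.
have hQw : eqN (Q2 w Y) 0.
  have := eqN_compl hQ w0; rewrite comp_poly0.
  by rewrite Q2comp comp_polyX.
have hQx : eqN (Q2 w (- 'X)) 0.
  have -> : Q2 w (- 'X) = Q2 'X F by rewrite /w /Q2; ring.
  exact: hQ.
set c := (1 *+ 2 - w) * (Y - 'X) - (1 - w - w ^+ 2).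
have hc : eqN ((Y + 'X) * c) 0.
  rewrite /eqN in hQw hQx *.
  have -> : (Y + 'X) * c - 0 = (Q2 w Y - 0) - (Q2 w (- 'X) - 0) by rewrite /c /Q2; ring.
  exact: dvdp_sub.
have c0 : c`_0 != 0.
  rewrite -horner_coef0 /c /Y !hornerE horner_comp /w !hornerE !horner_coef0 F0.
  rewrite !(oppr0, subr0, mulr0, expr0n) /= horner_coef0 F0 addr0 mulr0 sub0r oppr_eq0 oner_eq0 //.
have := eqN_cancel hc c0; rewrite /eqN !subr0 => h.
by rewrite -opprD dvdpNr.
Qed.

Lemma hGP : eqN (G * Pp) Ap.
Proof.
have h1 := hG; have h2 := hPJ; rewrite /eqN in h1 h2 *.
have -> : G * Pp - Ap = Pp * (G - Ap * J) + Ap * (Pp * J - 1) by ring.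
by rewrite dvdp_add // dvdp_mull.
Qed.

Lemma hGG : eqN (G * (G \Po (- F))) 1.
Proof.
set w := - F.
have hv : eqN ((G \Po w) * (1 - w - w ^+ 2)) (1 + w ^+ 2).
  by have := eqN_compl hGP w0; rewrite comp_polyM compP compA.
have hu := hGP; have hq := hQ.
have hP := compP w.
suff : eqN (G * (G \Po w) - 1) 0 by rewrite /eqN subr0.
apply: (@eqN_cancel N _ (Pp * (Pp \Po w))); last first.
  rewrite -horner_coef0 hornerM horner_comp /w (horner_coef0 (- F)) w0.
  by rewrite /Pp !hornerE !(oppr0, subr0, expr0n) /= mulr1 oner_eq0.
rewrite /eqN in hv hu hq *; rewrite hP.
have -> : (G * (G \Po w) - 1) * (Pp * (1 - w - w ^+ 2)) - 0 =
  (Q2 'X F - 0) + (1 + w ^+ 2 + ((G \Po w) * (1 - w - w ^+ 2) - (1 + w ^+ 2))) * (G * Pp - Ap)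
  + Ap * ((G \Po w) * (1 - w - w ^+ 2) - (1 + w ^+ 2)).
  rewrite /w /Q2 /Pp /Ap; ring.
by apply: dvdp_add; [apply: dvdp_add; [done| apply: dvdp_mull] | apply: dvdp_mull].
Qed.

Lemma compN (p q : {poly algC}) : (- p) \Po q = - (p \Po q).
Proof. by rewrite -sub0r comp_polyB comp_poly0 sub0r. Qed.

Local Notation f1 := (fps_comp (fps_opp fpsX) lucas_f).
Local Notation g1 := (fps_mul lucas_g (fps_comp fps1 lucas_f)).

Lemma f1_0 : f1 0%N = 0.
Proof. by rewrite /fps_comp big_ord1 /fps_opp /fpsX /ofseq /= oppr0 mul0r. Qed.

Lemma TeqN a b : eqN (T a) (T b) -> a N = b N.
Proof.
move=> h; rewrite -(coefT a (leqnn N)) -(coefT b (leqnn N)).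
exact: coef_eqN h (leqnn N).
Qed.

Lemma hmX : eqN (T (fps_opp fpsX)) (- 'X).
Proof.
rewrite -PolymX (@T_ext N _ (ofseq [:: 0; -1])); first exact: T_ofseq.
by case => [|[|i]]; rewrite /fps_opp /fpsX /ofseq /= ?oppr0 // nth_nil oppr0.
Qed.

Lemma hX : eqN (T fpsX) 'X.
Proof. rewrite -PolyX; exact: T_ofseq. Qed.

Lemma hf1 : eqN (T f1) (- F).
Proof.
apply: eqN_trans (T_comp _ _ lucas_f0) _.
by have := eqN_compl hmX F0; rewrite compN comp_polyX.
Qed.

Lemma hg1 : eqN (T g1) G.
Proof.
apply: eqN_trans (T_mul _ _ _) _.
rewrite -[X in eqN _ X]mulr1; apply: eqN_mul; first exact: eqN_refl.
apply: eqN_trans (T_comp _ _ lucas_f0) _.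
by have := eqN_compl (T_one N) F0; rewrite comp1.
Qed.

Lemma Tf1_0 : (T f1)`_0 = 0.
Proof. by rewrite coefT // f1_0. Qed.

Lemma final1 : eqN (T (fps_mul g1 (fps_comp g1 f1))) (T fps1).
Proof.
apply: eqN_trans _ (eqN_sym (T_one N)).
apply: eqN_trans (T_mul _ _ _) _.
apply: eqN_trans _ hGG; apply: eqN_mul; first exact: hg1.
apply: eqN_trans (T_comp _ _ f1_0) _.
apply: eqN_trans (eqN_compl hg1 Tf1_0) _.
exact: eqN_compr hf1.
Qed.

Lemma final2 : eqN (T (fps_comp f1 f1)) (T fpsX).
Proof.
apply: eqN_trans _ (eqN_sym hX).
apply: eqN_trans (T_comp _ _ f1_0) _.
apply: eqN_trans (eqN_compl hf1 Tf1_0) _.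
apply: eqN_trans (eqN_compr _ hf1) _.
by rewrite compN; exact: hY.
Qed.

End Main.

Theorem mainTheorem11 :
  lucas_f 0%N = 0 /\ lucas_f 1%N != 0 /\ is_riordan (lucas_g, lucas_f) /\
  pseudo_involution (lucas_g, lucas_f).
Proof.
have f1ne : lucas_f 1%N != 0.
  rewrite /lucas_f /fps_div /fps_mul big_ord_recr big_ord1 /= /fps_sub /=.
  rewrite /fps_inv /= /fps_sqrt1 /= big_ord0 big_ord1 /=.
  rewrite subrr mul0r add0r subr0 /disc /ofseq /=.
  have h2 : (2%:R : algC) != 0 by rewrite pnatr_eq0.
  have h4 : (4%:R : algC) != 0 by rewrite pnatr_eq0.
  rewrite (_ : _ / _ = 1) ?oner_eq0 //.
  by field.
split; first exact: lucas_f0.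
split; first exact: f1ne.
split.
  split; last by split; [exact: lucas_f0 | exact: f1ne].
  rewrite /= /lucas_g /fps_div /fps_mul big_ord1 /fps_inv /= /ofseq /=.
  by rewrite invr1 mulr1 oner_eq0.
move=> n; split.
  exact: (TeqN (final1 n)).
exact: (TeqN (final2 n)).
Qed.
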